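(* Let $K$ be a field and let $f(X)\in XK[X^2]$ be a monic polynomial. If $f(X)=g(X)\circ h(X)$ with $g,h\in K[X]$, where the characteristic of $K$ does not divide $\deg(g)$, then there exists a degree-one $\rho(X)\in K[X]$ such that both $g(\rho(X))$ and $\rho^{-1}(h(X))$ are monic polynomials in $XK[X^2]$.
   Context: $XK[X^2]$ denotes the set of polynomials all of whose terms have odd degree. For a degree-one $\rho(X)=aX+b\in K[X]$, $\rho^{-1}(X):=(X-b)/a$ is its compositional inverse. If $\mathrm{char}(K)=0$ the divisibility hypothesis holds automatically. *)

(* Defs.v *)
From HB Require Import structures.
From mathcomp Require Import all_boot all_order all_algebra.
Set Implicit Arguments. Unset Strict Implicit. Unset Printing Implicit Defensive.
Import GRing.Theory.
Local Open Scope ring_scope.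

(* p \in X K[X^2]: every term of p has odd degree, i.e. all coefficients of
   even degree vanish. *)
Definition odd_termsP (K : fieldType) (p : {poly K}) : Prop :=
  forall i : nat, ~~ odd i -> p`_i = 0.

Definition comp_inv (K : fieldType) (rho : {poly K}) : {poly K} :=
  (rho`_1)^-1 *: ('X - (rho`_0)%:P).

(* Main.v *)
Require Import Defs.
From HB Require Import structures.
From mathcomp Require Import all_boot all_order all_algebra.
From mathcomp Require Import ring zify.
Import GRing.Theory.
Local Open Scope ring_scope.

Section Aux.
Variable K : fieldType.
Implicit Types p q P : {poly K}.

Definition isE p := forall i : nat, odd i -> p`_i = 0.

Lemma coefE2 p i : (even_poly p \Po 'X^2)`_i = if odd i then 0 else p`_i.
Proof.
rewrite coef_comp_poly_Xn // dvdn2; case Hi: (odd i) => //=.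
by rewrite coef_even_poly divn2 halfK Hi subn0.
Qed.

Lemma coefO2 p i : ((odd_poly p \Po 'X^2) * 'X)`_i = if odd i then p`_i else 0.
Proof.
rewrite coefMX; case: i => [|i] //=.
rewrite coef_comp_poly_Xn // dvdn2; case Hi: (odd i) => //=.
by rewrite coef_odd_poly divn2 halfK Hi subn0.
Qed.

Lemma coefX2odd P i : odd i -> (P \Po 'X^2)`_i = 0.
Proof. by move=> Hi; rewrite coef_comp_poly_Xn // dvdn2 Hi. Qed.

Lemma coefX2Xeven P i : ~~ odd i -> ((P \Po 'X^2) * 'X)`_i = 0.
Proof.
rewrite coefMX; case: i => [|i] //= Hi.
by rewrite coef_comp_poly_Xn // dvdn2; move: Hi; rewrite /= negbK => ->.
Qed.

Lemma split_EO p : p = even_poly p \Po 'X^2 + (odd_poly p \Po 'X^2) * 'X.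
Proof. by apply/polyP => i; rewrite coefD coefE2 coefO2; case: (odd i); rewrite ?add0r ?addr0. Qed.

Lemma Eform p : isE p -> p = even_poly p \Po 'X^2.
Proof.
move=> hp; apply/polyP => i; rewrite coefE2; case Hi: (odd i) => //; exact: hp.
Qed.

Lemma Oform p : odd_termsP p -> p = (odd_poly p \Po 'X^2) * 'X.
Proof.
move=> hp; apply/polyP => i; rewrite coefO2; case Hi: (odd i) => //; apply: hp; by rewrite Hi.
Qed.

Lemma isE_X2 P : isE (P \Po 'X^2).
Proof. by move=> i; apply: coefX2odd. Qed.

Lemma isO_X2X P : odd_termsP ((P \Po 'X^2) * 'X).
Proof. by move=> i; apply: coefX2Xeven. Qed.

Lemma isE_mul p q : isE p -> isE q -> isE (p * q).
Proof.
move=> /Eform hp /Eform hq; rewrite hp hq -comp_polyM; exact: isE_X2.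
Qed.

Lemma isEO_mul p q : isE p -> odd_termsP q -> odd_termsP (p * q).
Proof.
move=> /Eform hp /Oform hq; rewrite hp hq mulrA -comp_polyM; exact: isO_X2X.
Qed.

Lemma isOO_mul p q : odd_termsP p -> odd_termsP q -> isE (p * q).
Proof.
move=> /Oform hp /Oform hq; rewrite hp hq.
have -> : (odd_poly p \Po 'X^2) * 'X * ((odd_poly q \Po 'X^2) * 'X) =
  (odd_poly p * odd_poly q * 'X) \Po 'X^2.
  by rewrite !comp_polyM comp_polyX; ring.
exact: isE_X2.
Qed.

Lemma isO_exp p j : odd_termsP p -> odd_termsP (p ^+ (j.*2.+1)).
Proof.
move=> hp; elim: j => [|j IH]; first by rewrite expr1.
rewrite doubleS exprS exprS mulrA; apply: isEO_mul => //; exact: isOO_mul.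
Qed.

Lemma isE_comp q p : isE p -> isE (q \Po p).
Proof. move=> /Eform hp; rewrite hp comp_polyA; exact: isE_X2. Qed.

Lemma isEO_0 p : isE p -> odd_termsP p -> p = 0.
Proof.
move=> he ho; apply/polyP => i; rewrite coef0; case Hi: (odd i).
  exact: he.
by apply: ho; rewrite Hi.
Qed.

Lemma isO_sub p q : odd_termsP p -> odd_termsP q -> odd_termsP (p - q).
Proof. by move=> hp hq i Hi; rewrite coefB hp ?hq ?subr0. Qed.

Lemma size_monic_pow p e : p \is monic -> size (p ^+ e) = ((size p).-1 * e).+1.
Proof.
move=> mp; rewrite -size_exp polySpred //; apply: monic_neq0; exact: monic_exp.
Qed.

Lemma size_from_coef p d : p`_d != 0 -> (forall j, (d < j)%N -> p`_j = 0) ->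
  size p = d.+1.
Proof.
move=> hd hj; apply/eqP; rewrite eqn_leq; apply/andP; split.
  by apply/leq_sizeP => j; apply: hj.
by rewrite ltnNge; apply/negP => /(nth_default 0); apply/eqP.
Qed.

End Aux.

Lemma key (K : fieldType) (g h f : {poly K}) (n m : nat) :
  g \is monic -> size g = n.+1 -> h \is monic -> size h = m.+1 ->
  odd n -> odd m -> h`_0 = 0 -> n%:R != 0 :> K -> f = g \Po h ->
  odd_termsP f -> odd_termsP h.
Proof.
move=> mg sg mh sh on om h0 n0 fE fO.
set he := even_poly h \Po 'X^2.
set ho := (odd_poly h \Po 'X^2) * 'X.
have hsplit : h = he + ho by exact: split_EO.
have [he0|heN0] := eqVneq he 0.
  by rewrite hsplit he0 add0r; apply: isO_X2X.
exfalso.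
have hcoef j : he`_j = if odd j then 0 else h`_j by rewrite coefE2.
have ocoef j : ho`_j = if odd j then h`_j else 0 by rewrite coefO2.
set k := (size he).-1.
have hek : he`_k != 0 by rewrite -lead_coefE lead_coef_eq0.
have kev : ~~ odd k by move: hek; rewrite hcoef; case: (odd k); rewrite ?eqxx.
have k0 : (0 < k)%N.
  rewrite lt0n; apply/negP => /eqP k0; move: hek; rewrite k0 hcoef /= h0 eqxx //.
have hm0 j : (m < j)%N -> h`_j = 0 by move=> hj; apply: nth_default; rewrite sh.
have hlead : h`_m = 1 by move: mh; rewrite monicE lead_coefE sh => /eqP.
have sizehe : (size he <= m)%N.
  apply/leq_sizeP => j; rewrite leq_eqVlt => /orP [/eqP <-|hj].
    by rewrite hcoef om.
  by rewrite hcoef hm0 // if_same.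
have km : (k < m)%N by rewrite /k; move: sizehe k0; rewrite /k; lia.
have hoO : odd_termsP ho by apply: isO_X2X.
have mho : ho \is monic.
  rewrite monicE lead_coefE (@size_from_coef _ _ m); first by rewrite ocoef om hlead.
    by rewrite ocoef om hlead oner_eq0.
  by move=> j hj; rewrite ocoef hm0 // if_same.
have sho : size ho = m.+1.
  apply: size_from_coef; first by rewrite ocoef om hlead oner_eq0.
  by move=> j hj; rewrite ocoef hm0 // if_same.
set d := (m * n.-1)%N.
set S := \sum_(i < n) h ^+ (n.-1 - i) * ho ^+ i.
have Tsize (i : 'I_n) : size (h ^+ (n.-1 - i) * ho ^+ i) = d.+1.
  rewrite size_monicM ?monic_exp //; last by apply: monic_neq0; apply: monic_exp.
  rewrite !size_monic_pow // sh sho /= /d.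
  have := ltn_ord i; move: (nat_of_ord i) => ii hii.
  rewrite addnS -mulnDr subnK //; lia.
have Tlead (i : 'I_n) : (h ^+ (n.-1 - i) * ho ^+ i)`_d = 1.
  have : (h ^+ (n.-1 - i) * ho ^+ i) \is monic by rewrite monicMl ?monic_exp.
  by rewrite monicE lead_coefE Tsize => /eqP.
have Sd : S`_d = n%:R.
  rewrite /S coef_sum (eq_bigr (fun _ => 1)); last by move=> i _; apply: Tlead.
  by rewrite sumr_const card_ord.
have Shi j : (d < j)%N -> S`_j = 0.
  move=> hj; rewrite /S coef_sum big1 // => i _; apply: nth_default; by rewrite Tsize.
have sS : size S = d.+1 by apply: size_from_coef; rewrite ?Sd.
have leadS : lead_coef S = n%:R by rewrite lead_coefE sS.
have sHe : size he = k.+1 by rewrite /k prednK // lt0n size_poly_eq0.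
have diff : h ^+ n - ho ^+ n = he * S.
  by rewrite subrXX {1}hsplit addrK.
have [r rE] : exists r, r = g - 'X^n by eexists.
have sr : (size r <= n)%N.
  rewrite rE; apply/leq_sizeP => j; rewrite leq_eqVlt => /orP [/eqP <-|hj].
    rewrite coefB coefXn eqxx.
    by move: mg; rewrite monicE lead_coefE sg => /eqP ->; rewrite subrr.
  rewrite coefB coefXn gtn_eqF // subr0; apply: nth_default; by rewrite sg.
have fE2 : f = ho ^+ n + he * S + (r \Po h).
  have gE : g = r + 'X^n by rewrite rE subrK.
  rewrite -diff fE gE comp_polyD comp_Xn_poly; ring.
set D := (d + k)%N.
have Dev : ~~ odd D.
  rewrite /D /d oddD oddM om /=.
  have on1 : forall x, odd x -> ~~ odd x.-1 by case=> [|x] //=; rewrite negbK.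
  by rewrite (negbTE (on1 _ on)) (negbTE kev).
have := fO D Dev; rewrite fE2 !coefD.
have -> : (ho ^+ n)`_D = 0.
  have nE : (n./2).*2.+1 = n by rewrite -{2}(odd_double_half n) on add1n.
  by have := @isO_exp _ ho (n./2) hoO; rewrite nE => H; apply: H.
have -> : (r \Po h)`_D = 0.
  apply: nth_default; apply: (leq_trans (size_comp_poly_leq _ _)).
  rewrite sh /= /D /d; have : ((size r).-1 <= n.-1)%N by lia.
  move=> hr; have := leq_mul hr (leqnn m); rewrite [(m * _)%N]mulnC => H.
  by apply: (leq_ltn_trans H); rewrite -{1}[(n.-1 * m)%N]addn0 ltn_add2l.
have -> : (he * S)`_D = he`_k * n%:R.
  have hSn : S != 0 by rewrite -size_poly_eq0 sS.
  rewrite -leadS -[he`_k]/(he`_(size he).-1) -!lead_coefE -lead_coefM lead_coefE.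
  by rewrite size_mul // sHe sS /D addSn addnS /= addnC.
rewrite add0r addr0 => /eqP; rewrite mulf_eq0 (negbTE hek) (negbTE n0) //.
Qed.

Theorem lemma2p4 (K : fieldType) (f g h : {poly K}) :
  f \is monic -> odd_termsP f ->
  f = g \Po h ->
  (forall p : nat, p \in [pchar K] -> ~~ (p %| (size g).-1)%N) ->
  exists rho : {poly K},
    size rho = 2%N /\
    (g \Po rho) \is monic /\ odd_termsP (g \Po rho) /\
    (comp_inv rho \Po h) \is monic /\ odd_termsP (comp_inv rho \Po h).
Proof.
move=> mf fO fE hc.
have f0 : f`_0 = 0 by apply: fO.
have sf : (1 < size f)%N.
  rewrite ltnNge; apply/negP => /size1_polyC Hf; move: mf.
  by rewrite Hf f0 monicE lead_coefC eq_sym oner_eq0.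
have szc := size_comp_poly g h; rewrite -fE in szc.
have oddf : odd (size f).-1.
  apply/negPn/negP => Hev; have := fO _ Hev; rewrite -lead_coefE.
  by move: mf; rewrite monicE => /eqP ->; apply/eqP; rewrite oner_eq0.
rewrite szc oddM in oddf; case/andP: oddf => on om.
set n := (size g).-1 in szc on hc.
set m := (size h).-1 in szc om.
have sg : size g = n.+1.
  rewrite /n prednK // lt0n size_poly_eq0; apply/negP => /eqP g0.
  by move: on; rewrite /n g0 size_poly0.
have sh : size h = m.+1.
  rewrite /m prednK // lt0n size_poly_eq0; apply/negP => /eqP h0.
  by move: om; rewrite /m h0 size_poly0.
have n0 : n%:R != 0 :> K.
  apply/negP => Hn.
  have npos : (0 < n)%N by move: on; case: (n).
  have [p hp] := natf0_pchar npos Hn.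
  by have := hc p hp; rewrite (dvdn_pcharf hp) Hn.
have h1 : (1 < size h)%N by rewrite sh; move: om; case: (m).
have leadf : lead_coef g * lead_coef h ^+ n = 1.
  by rewrite -lead_coef_comp // -fE; apply/eqP.
set a := lead_coef h.
set b := h`_0.
have a0 : a != 0.
  by rewrite /a lead_coef_eq0 -size_poly_eq0 sh.
set rho := a%:P * 'X + b%:P.
have srho : size rho = 2%N.
  by rewrite /rho size_MXaddC polyC_eq0 (negbTE a0) /= size_polyC a0.
have rho0 : rho`_0 = b by rewrite /rho coefD coefMX !coefC /= add0r.
have rho1 : rho`_1 = a by rewrite /rho coefD coefMX !coefC /= addr0.
have ci : comp_inv rho = a^-1 *: ('X - b%:P) by rewrite /comp_inv rho0 rho1.
exists rho; rewrite ci.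
set h' := a^-1 *: ('X - b%:P) \Po h.
have h'E : h' = a^-1 *: (h - b%:P) by rewrite /h' comp_polyZ comp_polyB comp_polyX comp_polyC.
have sbh : (size (- b%:P) < size h)%N.
  by rewrite size_polyN (leq_ltn_trans (size_polyC_leq1 _)).
have sh' : size h' = m.+1.
  by rewrite h'E size_scale ?invr_eq0 // size_polyDl.
have mh' : h' \is monic.
  by rewrite monicE h'E lead_coefZ lead_coefDl // mulVf.
have h'0 : h'`_0 = 0 by rewrite h'E coefZ coefB coefC /= subrr mulr0.
set g' := g \Po rho.
have sg' : size g' = n.+1 by rewrite /g' size_comp_poly2.
have mg' : g' \is monic.
  rewrite monicE /g' lead_coef_comp; last by rewrite srho.
  by rewrite [lead_coef rho]lead_coefE srho rho1 -/n leadf.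
have fg : f = g' \Po h'.
  rewrite /g' -comp_polyA fE; congr (g \Po _).
  rewrite /rho comp_polyD comp_polyM !comp_polyC comp_polyX h'E.
  by rewrite mul_polyC scalerA mulfV // scale1r subrK.
have hO : odd_termsP h' := @key K g' h' f n m mg' sg' mh' sh' on om h'0 n0 fg fO.
split => //; split => //; split; last by split.
set h2 := h' ^+ 2.
have hE2 : isE K h2 by rewrite /h2 expr2; apply: isOO_mul.
have fE' : g' \Po h' = (even_poly g' \Po h2) + (odd_poly g' \Po h2) * h'.
  rewrite {1}(split_EO K g') comp_polyD comp_polyM comp_polyX -!comp_polyA.
  by rewrite !comp_Xn_poly.
have Ep0 : even_poly g' \Po h2 = 0.
  apply: isEO_0; first exact: isE_comp.
  have -> : even_poly g' \Po h2 = f - (odd_poly g' \Po h2) * h'.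
    by rewrite fg fE' addrK.
  apply: isO_sub => //; apply: isEO_mul => //; exact: isE_comp.
have sh2 : (1 < size h2)%N.
 by rewrite /h2 size_monic_pow // sh' /= ltnS muln2 double_gt0; move: om; case: (m).
move/eqP: Ep0; rewrite comp_poly_eq0 // => /eqP e0.
rewrite (split_EO K g') e0 comp_poly0 add0r; exact: isO_X2X.
Qed.
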